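(* Let $(a,b,c,d)\in\mathbb{Z}_{\ge0}^4$ and let $t$ be a positive integer with $t\le q_0-1$. Then $aq+b(q+q_0)+c(q+2q_0)+d(q+2q_0+1)\le t(q+2q_0+1)$ if and only if $a+b+c+d\le t$.
   Context: $n\ge2$ is an integer, $q_0=2^n$ and $q=2q_0^2$. *)

(* Defs.v *)
From mathcomp Require Import all_boot.
Definition q0 (n : nat) : nat := 2 ^ n.
Definition q (n : nat) : nat := 2 * (q0 n) ^ 2.

(* Main.v *)
Require Import Defs.
From mathcomp Require Import all_boot.
From mathcomp Require Import zify.
From Stdlib Require Import Lia.

Theorem lemma3p1 (n : nat) (hn : 2 <= n) (a b c d t : nat)
  (ht0 : 0 < t) (ht : t <= q0 n - 1) :
  (a * q n + b * (q n + q0 n) + c * (q n + 2 * q0 n)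
     + d * (q n + 2 * q0 n + 1) <= t * (q n + 2 * q0 n + 1))
  <-> (a + b + c + d <= t).
Proof.
  rewrite /q.
  have hx : 0 < q0 n by rewrite /q0 expn_gt0.
  move: ht hx. set x := q0 n => ht hx.
  have -> : x ^ 2 = x * x by rewrite expnS expn1.
  split => H.
  - case: (leqP (a+b+c+d) t) => // Hlt; exfalso.
    have H1 : (t.+1) * (2*(x*x)) <= (a+b+c+d) * (2*(x*x)) by apply: leq_mul.
    have H2 : t * (2*x+1) < 2*(x*x).
      have : t * (2*x+1) <= (x-1)*(2*x+1) by apply: leq_mul.
      nia.
    nia.
  - have H1 : (a+b+c+d) * (2*(x*x)+2*x+1) <= t * (2*(x*x)+2*x+1) by apply: leq_mul.
    nia.
Qed.
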